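(* If $p\in\mathbb{C}[u,\mathbf{v}]$ satisfies $p_N\equiv0$ on $U(N)$ for every $N\ge1$, then $p$ is the zero polynomial.
   Context: $\mathbb{C}[u,\mathbf{v}]$ is the polynomial algebra over $\mathbb{C}$ in $u$ and $v_1,v_2,\dots$. For $p\in\mathbb{C}[u,\mathbf{v}]$, $p_N:U(N)\to M_N(\mathbb{C})$ is $p_N(U)=p(U,\mathrm{tr}(U),\mathrm{tr}(U^2),\dots)$, substituting $u=U$ and $v_j=\mathrm{tr}(U^j)I$, with $\mathrm{tr}(A)=\frac1N\sum_jA_{jj}$. *)

(* Defs.v *)
From HB Require Import structures.
From mathcomp Require Import all_boot all_order all_algebra.
Set Implicit Arguments. Unset Strict Implicit. Unset Printing Implicit Defensive.
Import Order.TTheory GRing.Theory Num.Theory.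
Local Open Scope ring_scope.

(* A monomial u^a v_1^{e_1} v_2^{e_2} ... is encoded as (a, [:: e_1; e_2; ...]);
   trailing zero exponents are irrelevant. *)
Definition monom := (nat * seq nat)%type.

(* Polynomials in C[u, v_1, v_2, ...]: finite formal sums of terms c * monomial. *)
Definition mpoly (C : Type) := seq (C * monom)%type.

Definition trim (s : seq nat) : seq nat :=
  rev (drop (find (fun x => x != 0%N) (rev s)) (rev s)).

Definition mcoef (C : nmodType) (p : mpoly C) (m : monom) : C :=
  \sum_(t <- p | (t.2.1 == m.1) && (trim t.2.2 == trim m.2)) t.1.

Definition mpoly_is_zero (C : nmodType) (p : mpoly C) : Prop :=
  forall m : monom, mcoef p m = 0.

Definition ntr (C : numClosedFieldType) (N : nat) (A : 'M[C]_N) : C :=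
  \tr A / N%:R.

(* p_N(U): substitute u = U and v_j = tr(U^j) I *)
Definition eval_term (C : numClosedFieldType) (N : nat) (U : 'M[C]_N)
  (t : C * monom) : 'M[C]_N :=
  (t.1 * \prod_(j < size t.2.2) (ntr (U ^+ j.+1)) ^+ (nth 0%N t.2.2 j))
    *: U ^+ t.2.1.

Definition peval (C : numClosedFieldType) (N : nat) (p : mpoly C)
  (U : 'M[C]_N) : 'M[C]_N :=
  \sum_(t <- p) eval_term U t.

Definition unitary (C : numClosedFieldType) (N : nat) (U : 'M[C]_N) : Prop :=
  U *m (map_mx Num.conj U)^T = 1%:M.

(* Main.v *)
Require Import Defs.
From HB Require Import structures.
From mathcomp Require Import all_boot all_order all_algebra all_fingroup all_solvable all_field.
From mathcomp Require Import ring.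
Set Implicit Arguments. Unset Strict Implicit. Unset Printing Implicit Defensive.
Import Order.TTheory GRing.Theory Num.Theory.
Local Open Scope ring_scope.

Lemma trim_rcons s x : trim (rcons s x) = if x == 0%N then trim s else rcons s x.
Proof.
rewrite /trim rev_rcons; case: x => [|x] //=.
by rewrite rev_cons revK.
Qed.

Lemma nth_trim s j : nth 0%N (trim s) j = nth 0%N s j.
Proof.
elim/last_ind: s j => [|s x IH] j //.
rewrite trim_rcons nth_rcons; case: eqP => [->|_]; last by rewrite nth_rcons.
rewrite IH; case: ltngtP => // h; first by rewrite nth_default // ltnW.
by rewrite nth_default // h.
Qed.

Lemma trim_ext n s e : (size s + size e <= n)%N ->
  (forall j, nth 0%N s j = nth 0%N e j) -> trim s = trim e.
Proof.
elim: n s e => [|n IH] s e.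
  by rewrite leqn0 addn_eq0 => /andP[/eqP/size0nil -> /eqP/size0nil ->].
wlog le: s e / (size e <= size s)%N => [W|].
  case: (leqP (size e) (size s)) => h hs hn; first exact: W.
  symmetry; apply: W; first exact: ltnW.
    by rewrite addnC.
  by move=> j; rewrite hn.
move=> hs hn; case: (ltngtP (size e) (size s)) le => [lt|//|eq] _; last first.
  by congr trim; apply: (@eq_from_nth _ 0%N) => // i _.
move: lt hs hn; case/lastP: s => [|s x] //; rewrite size_rcons ltnS => le hs hn.
have x0 : x = 0%N.
  by have := hn (size s); rewrite nth_rcons ltnn eqxx nth_default.
rewrite trim_rcons x0 eqxx; apply: IH.
  by move: hs; rewrite addSn.
move=> j; rewrite -hn nth_rcons; case: ltngtP => [h|h|->] //.
  by rewrite nth_default // ltnW.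
by rewrite nth_default.
Qed.
Lemma trimP s e : reflect (forall j, nth 0%N s j = nth 0%N e j) (trim s == trim e).
Proof.
apply: (iffP eqP) => [h j | h]; first by rewrite -nth_trim h nth_trim.
exact: (@trim_ext (size s + size e)).
Qed.

Lemma size_take_le n (s : seq nat) : (size (take n s) <= n)%N.
Proof. by rewrite size_take; case: ltnP => // /ltnW. Qed.

Section Sep.
Variable C : idomainType.

Lemma sep (T : eqType) (q : seq T) (w : T -> C) (g : T -> nat) (rs : seq C) :
  uniq rs -> (forall t, t \in q -> (g t < size rs)%N) ->
  (forall y, y \in rs -> \sum_(t <- q) w t * y ^+ g t = 0) ->
  forall d, \sum_(t <- q | g t == d) w t = 0.
Proof.
move=> urs hg hy d.
pose P := \sum_(t <- q) w t *: 'X^(g t).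
have cP k : P`_k = \sum_(t <- q | g t == k) w t.
  rewrite coef_sum [RHS]big_mkcond /=; apply: eq_bigr => t _.
  by rewrite coefZ coefXn eq_sym; case: (g t == k); rewrite ?mulr1 ?mulr0.
suff P0 : P = 0 by rewrite -cP P0 coef0.
apply/eqP; apply: contraT => nz.
have : all (root P) rs.
  apply/allP => y /hy h; rewrite /root /P horner_sum; apply/eqP; rewrite -[RHS]h.
  by apply: eq_bigr => t _; rewrite hornerZ hornerXn.
move/(max_poly_roots nz)/(_ urs); rewrite ltnNge => /negP h; exfalso; apply: h.
apply/leq_sizeP => j hj; rewrite cP big1_seq // => t /andP[/eqP gt tq].
by have := hg t tq; rewrite gt ltnNge hj.
Qed.

Definition ev (v : nat -> C) (e : seq nat) := \prod_(j < size e) v j ^+ nth 0%N e j.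

Lemma evL v e L : (size e <= L)%N -> ev v e = \prod_(j < L) v j ^+ nth 0%N e j.
Proof.
move=> h; rewrite /ev (big_ord_widen L (fun j => v j ^+ nth 0%N e j)) //.
rewrite big_mkcond /=; apply: eq_bigr => j _.
by case: ltnP => // hj; rewrite nth_default // expr0.
Qed.

Lemma indep (K : nat) (F : (nat -> nat) -> nat -> C)
 (rich : forall m i, (i < K)%N -> exists mk : nat -> (nat -> nat),
    (forall k j, (j < i)%N -> F (mk k) j = F m j) /\ injective (fun k => F (mk k) i)) :
 forall n, (n <= K)%N -> forall q : seq (C * seq nat),
   (forall t, t \in q -> (size t.2 <= n)%N) ->
   (forall m, \sum_(t <- q) t.1 * ev (F m) t.2 = 0) ->
   forall e, \sum_(t <- q | trim t.2 == trim e) t.1 = 0.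
Proof.
elim => [|n IH] hn q hs hq e.
  have nil t : t \in q -> t.2 = [::].
    by move/hs; rewrite leqn0 size_eq0 => /eqP.
  have h0 : \sum_(t <- q) t.1 = 0.
    rewrite -[RHS](hq (fun _ => 0%N)) big_seq [RHS]big_seq; apply: eq_bigr => t /nil.
    by rewrite /ev => ->; rewrite big_ord0 mulr1.
  case he: (trim e == [::]).
    rewrite -[RHS]h0 big_seq_cond [RHS]big_seq; apply: eq_bigl => t.
    by case tq: (t \in q) => //=; rewrite (nil t tq) (eqP he).
  rewrite big1_seq // => t /andP[/eqP ht tq]; move: he.
  by rewrite -ht (nil t tq).
have key d m : \sum_(t <- q | nth 0%N t.2 n == d) t.1 * ev (F m) (take n t.2) = 0.
  have [mk [hlow hinj]] := rich m n hn.
  pose B := (\max_(t <- q) nth 0%N t.2 n).+1.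
  apply: (@sep _ q (fun t => t.1 * ev (F m) (take n t.2)) (fun t => nth 0%N t.2 n)
     [seq F (mk k) n | k <- iota 0 B]).
  - by rewrite map_inj_uniq ?iota_uniq.
  - move=> t tq; rewrite size_map size_iota ltnS.
    exact: (@leq_bigmax_seq _ _ xpredT (fun t => nth 0%N t.2 n)).
  move=> y /mapP[k _ ->]; rewrite -[RHS](hq (mk k)) big_seq [RHS]big_seq.
  apply: eq_bigr => t tq.
  rewrite (evL _ (hs t tq)) big_ord_recr /= (evL _ (size_take_le n t.2)) mulrA.
  congr (_ * _ * _); apply: eq_bigr => j _; rewrite hlow // nth_take //.
case E: (trim e == trim (take n.+1 e)); last first.
  rewrite big1_seq // => t /andP[/trimP ht tq]; exfalso; move/negbT/negP: E; apply; apply/trimP => j.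
  case: (ltnP j n.+1) => hj; first by rewrite nth_take.
  rewrite -ht nth_default ?nth_default //; last exact: leq_trans (hs t tq) hj.
  exact: leq_trans (size_take_le _ _) hj.
have eqv s : (size s <= n.+1)%N -> (trim s == trim e) =
     (nth 0%N s n == nth 0%N e n) && (trim (take n s) == trim (take n e)).
  move=> hsz; apply/trimP/andP => [h|[/eqP hn' /trimP ht] j].
    split; first by rewrite h.
    apply/trimP => j; case: (ltnP j n) => hj; first by rewrite !nth_take.
    by rewrite !nth_default // (leq_trans (size_take_le _ _) hj).
  case: (ltngtP j n) => [hj|hj|->] //; first by have := ht j; rewrite !nth_take.
  rewrite nth_default; last exact: leq_trans hsz hj.
  by move/trimP: E => ->; rewrite nth_default // (leq_trans (size_take_le _ _) hj).
have := IH (ltnW hn) [seq (t.1, take n t.2) | t <- q & nth 0%N t.2 n == nth 0%N e n] _ _ (take n e).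
rewrite big_map big_filter_cond /= => hh; rewrite -[RHS]hh.
- rewrite big_seq_cond [RHS]big_seq_cond; apply: eq_bigl => t.
  by case tq: (t \in q) => //=; rewrite eqv // hs.
- by move=> u /mapP[t _ ->]; apply: size_take_le.
move=> m; rewrite big_map big_filter /=.
rewrite (eq_bigr (fun t => t.1 * ev (F m) (take n t.2))) ?key //.
Qed.

End Sep.
Section Roots.
Variable C : numClosedFieldType.

Lemma prim_exists n : (0 < n)%N -> exists z : C, n.-primitive_root z.
Proof.
pose p : {poly C} := 'X^n - 1; have [r Dp] := closed_field_poly_normal p.
move=> n_gt0; rewrite (monicP _) ?monicXnsubC // scale1r in Dp.
have rn1: all n.-unity_root r by apply/allP=> z; rewrite -root_prod_XsubC -Dp.
have sz_r: (n < (size r).+1)%N.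
  by rewrite -(size_prod_XsubC r id) -Dp size_XnsubC.
have [|z] := hasP (has_prim_root n_gt0 rn1 _ sz_r); last by exists z.
by rewrite -separable_prod_XsubC -Dp separable_Xn_sub_1 // pnatr_eq0 -lt0n.
Qed.

Lemma ex_zeta n : exists z : C, (n == 0%N) || n.-primitive_root z.
Proof.
case: n => [|n]; first by exists 0.
by have [z hz] := prim_exists (ltn0Sn n); exists z; rewrite hz orbT.
Qed.

Definition zeta n : C := xchoose (ex_zeta n).

Lemma zetaP n : (0 < n)%N -> n.-primitive_root (zeta n).
Proof. by case: n => // n _; have := xchooseP (ex_zeta n.+1). Qed.

Lemma sum_roots l j : (0 < l)%N ->
  \sum_(i < l) (zeta l ^+ i) ^+ j = (l * (l %| j))%N%:R.
Proof.
move=> l0; have pz := zetaP l0.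
under eq_bigr do rewrite exprAC.
have zl : (zeta l ^+ j) ^+ l = 1 by rewrite exprAC (prim_expr_order pz) expr1n.
case: (boolP (l %| j)%N) => hd.
  have -> : zeta l ^+ j = 1.
    by rewrite -(divnK hd) mulnC exprM (prim_expr_order pz) expr1n.
  by rewrite muln1; under eq_bigr do rewrite expr1n; rewrite sumr_const card_ord.
have n1 : zeta l ^+ j != 1.
  by rewrite -(expr0 (zeta l)) (eq_prim_root_expr pz) mod0n.
have := subrX1 (zeta l ^+ j) l; rewrite zl subrr => /esym/eqP.
by rewrite mulf_eq0 subr_eq0 (negbTE n1) /= muln0 => /eqP.
Qed.

Lemma zeta_norm l i : (0 < l)%N -> (zeta l ^+ i) * (zeta l ^+ i)^* = 1.
Proof.
move=> l0; have pz := zetaP l0.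
have n1 : `|zeta l| = 1.
  apply/eqP; rewrite -(pexpr_eq1 l0) // -normrX (prim_expr_order pz) normr1 //.
by rewrite -normCK normrX n1 !expr1n.
Qed.

Definition roots l := [seq zeta l ^+ i | i <- iota 0 l].
Definition eigs (bs : seq (nat * nat)) := flatten [seq flatten (nseq b.2 (roots b.1)) | b <- bs].

Lemma sum_nseq (f : C -> C) k (r : seq C) :
  \sum_(z <- flatten (nseq k r)) f z = (\sum_(z <- r) f z) *+ k.
Proof. by elim: k => [|k IH]; rewrite ?big_nil ?mulr0n //= big_cat IH mulrS. Qed.

Lemma eigs_sum bs j : all (fun b => 0 < b.1)%N bs ->
  \sum_(z <- eigs bs) z ^+ j = (\sum_(b <- bs) b.2 * (b.1 * (b.1 %| j)))%N%:R.
Proof.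
elim: bs => [|b bs IH]; first by rewrite /eigs /= !big_nil.
move=> /= /andP[b0 hb]; rewrite /eigs /= big_cat /= -/(eigs bs) IH // big_cons natrD.
congr (_ + _); rewrite sum_nseq /roots big_map.
have -> : \sum_(i <- iota 0 b.1) (zeta b.1 ^+ i) ^+ j = \sum_(i < b.1) (zeta b.1 ^+ i) ^+ j.
  have e : iota 0 b.1 = index_iota 0 b.1 by rewrite /index_iota subn0.
  by rewrite e big_mkord.
by rewrite sum_roots // [RHS]natrM mulr_natl.
Qed.

Lemma eigs_norm bs z : all (fun b => 0 < b.1)%N bs -> z \in eigs bs -> z * z^* = 1.
Proof.
move=> /allP hb /flattenP[s /mapP[b bin ->] /flattenP[r]].
rewrite mem_nseq => /andP[_ /eqP ->] /mapP[i _ ->].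
exact: zeta_norm (hb b bin).
Qed.

Lemma eigs_size bs : size (eigs bs) = (\sum_(b <- bs) b.2 * b.1)%N.
Proof.
elim: bs => [|b bs IH]; first by rewrite big_nil.
rewrite /eigs /= size_cat -/(eigs bs) IH big_cons; congr (_ + _)%N.
elim: b.2 => [|k IHk] //=; by rewrite size_cat IHk /roots size_map size_iota.
Qed.

Definition Dm (s : seq C) : 'M[C]_(size s) := diag_mx (\row_(i < size s) s`_i).

Lemma Dm_exp s a : Dm s ^+ a = diag_mx (\row_(i < size s) s`_i ^+ a).
Proof.
elim: a => [|a IH].
  by apply/matrixP => i j; rewrite !mxE expr0.
by rewrite exprS IH /Dm -mulmxE mulmx_diag; congr diag_mx; apply/matrixP => i j; rewrite !mxE exprS.
Qed.

Lemma Dm_unitary s : (forall z, z \in s -> z * z^* = 1) -> unitary (Dm s).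
Proof.
move=> h; rewrite /unitary /Dm map_diag_mx tr_diag_mx mulmx_diag.
apply/matrixP => i j; rewrite !mxE h //; exact: mem_nth.
Qed.

Lemma Dm_tr s j : \tr (Dm s ^+ j) = \sum_(z <- s) z ^+ j.
Proof.
rewrite Dm_exp mxtrace_diag [RHS](big_nth 0) big_mkord.
by apply: eq_bigr => i _; rewrite mxE.
Qed.

End Roots.

Definition wsum (e : seq nat) := (\sum_(j < size e) nth 0%N e j)%N.

Lemma wsumL e L : (size e <= L)%N -> wsum e = (\sum_(j < L) nth 0%N e j)%N.
Proof.
move=> h; rewrite /wsum (big_ord_widen L (fun j => nth 0%N e j)) //.
rewrite big_mkcond /=; apply: eq_bigr => j _.
by case: ltnP => // hj; rewrite nth_default.
Qed.

Lemma wsum_ext s e : (forall j, nth 0%N s j = nth 0%N e j) -> wsum s = wsum e.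
Proof.
move=> h; rewrite (@wsumL s (size s + size e)) ?leq_addr //.
rewrite (@wsumL e (size s + size e)) ?leq_addl //.
by apply: eq_bigr => j _.
Qed.

Unset Implicit Arguments.

Theorem mainTheorem13 (C : numClosedFieldType) (p : mpoly C) :
  (forall (N : nat), (0 < N)%N ->
     forall U : 'M[C]_N, unitary U -> peval p U = 0) ->
  mpoly_is_zero p.
Proof.
move=> H [al e].
pose K := (\max_(t <- p) size t.2.2)%N.
pose A := (\max_(t <- p) t.2.1)%N.
pose M := (K + A).+1.
have hK t : t \in p -> (size t.2.2 <= K)%N.
  by move=> tp; apply: (@leq_bigmax_seq _ _ xpredT (fun t : C * monom => size t.2.2)).
have hA t : t \in p -> (t.2.1 < M)%N.
  move=> tp; rewrite ltnS (leq_trans _ (leq_addl _ _)) //.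
  by apply: (@leq_bigmax_seq _ _ xpredT (fun t : C * monom => t.2.1)).
pose bs (m : nat -> nat) s := [seq (l.+1, m l) | l <- iota 0 K] ++ [:: (M, s.+1)].
have hpos m s : all (fun b => 0 < b.1)%N (bs m s).
  by rewrite all_cat all_map /=; apply/andP; split => //; apply/allP.
pose Fn (m : nat -> nat) j := (\sum_(l < K) m l * (l.+1 * (l.+1 %| j.+1)))%N.
pose Nb (m : nat -> nat) s := (\sum_(l < K) m l * l.+1 + s.+1 * M)%N.
have iotaK : iota 0 K = index_iota 0 K by rewrite /index_iota subn0.
have hF m s j : (j < K)%N ->
    (\sum_(b <- bs m s) b.2 * (b.1 * (b.1 %| j.+1)))%N = Fn m j.
  move=> jK; rewrite big_cat big_map /= big_cons big_nil iotaK big_mkord.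
  rewrite gtnNdvd // ?muln0 ?addn0 //.
  by rewrite ltnS (leq_trans jK) // leq_addr.
have hN m s : size (eigs C (bs m s)) = Nb m s.
  by rewrite (@eigs_size C) big_cat big_map /= big_cons big_nil iotaK big_mkord addn0.
pose z := zeta C M.
have E0 m s sg : (sg < M)%N ->
  \sum_(t <- p) t.1 * (\prod_(j < size t.2.2) ((Fn m j)%:R / (Nb m s)%:R) ^+ nth 0%N t.2.2 j)
     * (z ^+ sg) ^+ t.2.1 = 0.
  move=> hsg; set eg := eigs C (bs m s).
  have zin : z ^+ sg \in eg.
    have zr : z ^+ sg \in roots C M by apply/mapP; exists sg; rewrite ?mem_iota.
    apply/flattenP; exists (flatten (nseq s.+1 (roots C M))).
      by apply/mapP; exists (M, s.+1) => //; rewrite /bs mem_cat mem_seq1 eqxx orbT.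
    by apply/flattenP; exists (roots C M); rewrite ?mem_nseq ?eqxx.
  have ix : (index (z ^+ sg) eg < size eg)%N by rewrite index_mem.
  have Npos : (0 < size eg)%N by exact: leq_ltn_trans (leq0n _) ix.
  have U0 := H _ Npos (Dm eg) (Dm_unitary (fun w => @eigs_norm C _ w (hpos m s))).
  have := congr1 (fun B : 'M[C]_(size eg) => B (Ordinal ix) (Ordinal ix)) U0.
  rewrite /= mxE /peval summxE => h; rewrite -[RHS]h big_seq [RHS]big_seq.
  apply: eq_bigr => t tp; rewrite /eval_term mxE Dm_exp !mxE eqxx mulr1n nth_index //.
  congr (_ * _ * _); apply: eq_bigr => j _; congr (_ ^+ _).
  have jK : (j < K)%N by exact: leq_trans (ltn_ord j) (hK t tp).
  by rewrite /ntr Dm_tr eigs_sum // hF // hN.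
have Mpos : (0 < M)%N by [].
have S1 m sg k : (sg < M)%N ->
  \sum_(t <- p | wsum t.2.2 == k)
     t.1 * (\prod_(j < size t.2.2) (Fn m j)%:R ^+ nth 0%N t.2.2 j) * (z ^+ sg) ^+ t.2.1 = 0.
  move=> hsg.
  apply: (@sep C _ p (fun t => t.1 * (\prod_(j < size t.2.2) (Fn m j)%:R ^+ nth 0%N t.2.2 j) * (z ^+ sg) ^+ t.2.1)
    (fun t => wsum t.2.2) [seq ((Nb m s)%:R)^-1 | s <- iota 0 (\max_(t <- p) wsum t.2.2).+1]).
  - rewrite map_inj_uniq ?iota_uniq // => s1 s2 /invr_inj /eqP.
    by rewrite eqr_nat /Nb eqn_add2l eqn_mul2r /= => /eqP [].
  - move=> t tp; rewrite size_map size_iota ltnS.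
    exact: (@leq_bigmax_seq _ _ xpredT (fun t : C * monom => wsum t.2.2)).
  move=> y /mapP[s _ ->]; rewrite -[RHS](E0 m s sg hsg); apply: eq_bigr => t _.
  rewrite /wsum -prodrXr.
  under [in RHS]eq_bigr do rewrite exprMn.
  rewrite big_split /=; ring.
have S2 m k a' : \sum_(t <- p | (wsum t.2.2 == k) && (t.2.1 == a'))
     t.1 * (\prod_(j < size t.2.2) (Fn m j)%:R ^+ nth 0%N t.2.2 j) = 0.
  have := @sep C _ [seq t <- p | wsum t.2.2 == k]
    (fun t => t.1 * (\prod_(j < size t.2.2) (Fn m j)%:R ^+ nth 0%N t.2.2 j))
    (fun t => t.2.1) [seq z ^+ sg | sg <- iota 0 M] _ _ _ a'.
  rewrite big_filter_cond; apply.
  - rewrite map_inj_in_uniq ?iota_uniq // => s1 s2; rewrite !mem_iota /= => h1 h2 /eqP.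
    by rewrite (eq_prim_root_expr (zetaP C Mpos)) !modn_small // => /eqP.
  - by move=> t; rewrite mem_filter size_map size_iota => /andP[_ /hA].
  move=> y /mapP[sg]; rewrite mem_iota /= => hsg ->.
  by rewrite big_filter; apply: S1.
pose F (m : nat -> nat) j : C := (Fn m j)%:R.
have rich m i : (i < K)%N -> exists mk : nat -> (nat -> nat),
    (forall k j, (j < i)%N -> F (mk k) j = F m j) /\ injective (fun k => F (mk k) i).
  move=> hi; exists (fun k l => if l == i then (m l + k)%N else m l); split.
    move=> k j ji; rewrite /F /Fn; congr (_%:R); apply: eq_bigr => l _.
    by case: eqP => // ->; rewrite gtnNdvd // !muln0.
  have split k : Fn (fun l => if l == i then (m l + k)%N else m l) i
       = ((m i + k) * i.+1 + \sum_(l < K | l != Ordinal hi) m l * (l.+1 * (l.+1 %| i.+1)))%N.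
    rewrite /Fn (bigD1 (Ordinal hi)) //= eqxx dvdnn muln1; congr (_ + _)%N.
    apply: eq_bigr => l hl; case: eqP => // li.
    by move: hl; rewrite -val_eqE /= li eqxx.
  move=> k1 k2 /eqP; rewrite /F eqr_nat !split eqn_add2r eqn_mul2r /= eqn_add2l.
  by move/eqP.
have := @indep C K F rich K (leqnn K)
  [seq (t.1, t.2.2) | t <- p & (wsum t.2.2 == wsum e) && (t.2.1 == al)] _ _ e.
rewrite big_map big_filter_cond /= /mcoef /= => hh; rewrite -[RHS]hh.
- apply: eq_bigl => t; case: (boolP (trim t.2.2 == trim e)) => /= ht; rewrite ?andbF //.
  by rewrite (wsum_ext (trimP _ _ ht)) eqxx /= andbT.
- by move=> u /mapP[t]; rewrite mem_filter => /andP[_ /hK] ? ->.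
move=> m; rewrite big_map big_filter /=.
exact: S2.
Qed.
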